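(* Consider $k$ agents in a multi-agent environment $\phi$ controlled by the VCG mechanism with Clark pivot payments, with the interaction protocol, rational valuation functions and realisable cumulative utility as described in the context. Suppose each agent $i$'s true valuation function at each time $t$ is its rational valuation function $v_{t,i}(\overline{h_{t-1}},\cdot)$. Then the protocol is Bayes–Nash incentive compatible with respect to each agent's realisable cumulative utility at every time step: for every time $t$, every joint history $\overline{h_{t-1}}$, every agent $i$ and every function $\widetilde v_{t,i}:\mathcal{X}\to\mathbb{R}$, if all agents $j\neq i$ submit their true rational valuation functions $v_{t,j}(\overline{h_{t-1}},\cdot)$, then the expected realisable cumulative utility of agent $i$ (expectation over $\overline{or_t}\sim\phi(\cdot\mid \overline{h_{t-1}}\,\overline{a_t})$, where $\overline{a_t}$ is the joint action selected by the mechanism from the submitted functions) when it submits $v_{t,i}(\overline{h_{t-1}},\cdot)$ is at least as large as when it submits $\widetilde v_{t,i}$.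
   Context: Setting. There are $k$ agents; agent $i$ has finite action set $\mathcal{A}_i$, finite observation set $\mathcal{O}_i$ and finite reward set $\mathcal{R}\subset\mathbb{R}$. A joint action is $\overline{a}=(a_1,\dots,a_k)$ and a joint percept is $\overline{or}=(o_1r_1,\dots,o_kr_k)$; $r_{t,i}$ denotes agent $i$'s reward component of $\overline{or_t}$. A joint history is $\overline{h_{t}}=\overline{a_1}\,\overline{or_1}\cdots\overline{a_t}\,\overline{or_t}$ ($\overline{h_0}$ empty). The multi-agent environment $\phi$ gives conditional probabilities $\phi(\overline{or_t}\mid \overline{h_{t-1}}\,\overline{a_t})$ of the next joint percept. $\mathcal{X}$ is the set of admissible joint actions. Mechanism. Given submitted functions $\overline{v}=(v_1,\dots,v_k)$ with $v_j:\mathcal{X}\to\mathbb{R}$, the social choice is $f(\overline v)\in\arg\max_{\overline a\in\mathcal{X}}\sum_j v_j(\overline a)$ and agent $i$ pays $p_i(\overline v)=\max_{\overline a}\sum_{j\neq i}v_j(\overline a)-\sum_{j\neq i}v_j(f(\overline v))$. Protocol: at time $t$ each agent $i$ submits $v_{t,i}$, the joint action $\overline{a_t}=f(\overline{v_t})$ is executed, $\overline{or_t}\sim\phi(\cdot\mid\overline{h_{t-1}}\,\overline{a_t})$ is sampled, agent $i$ receives $or_{t,i}$ and is charged $p_i(\overline{v_t})$. Rational valuation functions (full knowledge of $\phi$ and the mechanism; agent $i$ has horizon $m_i$), defined by backward induction: $q_{t,i}(\overline{h_{t-1}},\overline{a_t})=0$ if $t>m_i$, else $\sum_{\overline{or_t}}\phi(\overline{or_t}\mid\overline{h_{t-1}}\,\overline{a_t})[r_{t,i}+\overline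 q_{t+1,i}(\overline{h_{t-1}}\,\overline{a_t}\,\overline{or_t})]$; $\overline q_{t,i}(\overline{h_{t-1}})=q_{t,i}(\overline{h_{t-1}},f(\overline{v_t}))$; $c_{t,i}(\overline{h_{t-1}},\overline{a_t})=0$ if $t\ge m_i$, else $\sum_{\overline{or_t}}\phi(\overline{or_t}\mid\overline{h_{t-1}}\,\overline{a_t})\,\overline c_{t+1,i}(\overline{h_{t-1}}\,\overline{a_t}\,\overline{or_t})$; $\overline c_{t,i}(\overline{h_{t-1}})=p_i(\overline{v_t})+c_{t,i}(\overline{h_{t-1}},f(\overline{v_t}))$; $v_{t,i}(\overline{h_{t-1}},\overline{a_t})=q_{t,i}(\overline{h_{t-1}},\overline{a_t})-c_{t,i}(\overline{h_{t-1}},\overline{a_t})$; here $\overline{v_t}=(v_{t,1}(\overline{h_{t-1}},\cdot),\dots,v_{t,k}(\overline{h_{t-1}},\cdot))$. Realisable cumulative utility. Given history $\overline{h_{t-1}}$, submitted functions $\overline{\widetilde v_t}$, joint action $\overline{a_t}=f(\overline{\widetilde v_t})$ and percept $\overline{or_t}\sim\phi(\cdot\mid\overline{h_{t-1}}\,\overline{a_t})$, agent $i$'s realisable cumulative utility at time $t$ is $r_{t,i}-p_i(\overline{\widetilde v_t})+\overline q_{t+1,i}(\overline{h_{t-1}}\,\overline{a_t}\,\overline{or_t})-\overline c_{t+1,i}(\overline{h_{t-1}}\,\overline{a_t}\,\overline{or_t})$. *)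

(* Defs.v *)
From mathcomp Require Import all_boot all_order all_algebra.
Set Implicit Arguments. Unset Strict Implicit. Unset Printing Implicit Defensive.
Import Order.TTheory GRing.Theory Num.Theory.
Local Open Scope ring_scope.

Section VCG.
Context {R : realFieldType} {k : nat} (A O : 'I_k -> finType) (Rw : finType).
(* rval : the finite reward set R (indexed by Rw) embedded in the reals *)
Variable rval : Rw -> R.

Definition jaction := {dffun forall i : 'I_k, A i}.
Definition jpercept := {dffun forall i : 'I_k, (O i * Rw)%type}.
(* joint history h_{t-1} = a_1 or_1 ... a_{t-1} or_{t-1}, in chronological
   order; h_{t-1} has size t-1, so the current time is t = size h + 1 *)
Definition history := seq (jaction * jpercept).
Definition reward (p : jpercept) (i : 'I_k) : R := rval (p i).2.
Definition profile := 'I_k -> jaction -> R.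

Variable X : {set jaction}.

Definition maxX (F : jaction -> R) : R :=
  if [pick a in X] is Some a0 then \big[Num.max/F a0]_(a in X) F a else 0.

Definition argmax_rule (f : profile -> jaction) : Prop :=
  forall v : profile, f v \in X /\
    (forall a, a \in X -> \sum_j v j a <= \sum_j v j (f v)).

Variable f : profile -> jaction.

Definition pay (v : profile) (i : 'I_k) : R :=
  maxX (fun a => \sum_(j | j != i) v j a) - \sum_(j | j != i) v j (f v).

Variable phi : history -> jaction -> jpercept -> R.
Variable m : 'I_k -> nat.

(* Backward induction with fuel n; returns (q_{t,i}(h,a), c_{t,i}(h,a))
   where t = size h + 1. *)
Fixpoint qc (n : nat) (h : history) (i : 'I_k) (a : jaction) : R * R :=
  match n with
  | 0 => (0, 0)
  | n'.+1 =>
    let t := (size h).+1 in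
    let next o := rcons h (a, o) in
    let vn h' : profile := fun j b => (qc n' h' j b).1 - (qc n' h' j b).2 in
    ((if (m i < t)%N then 0 else
        \sum_o phi h a o * (reward o i + (qc n' (next o) i (f (vn (next o)))).1)),
     (if (m i <= t)%N then 0 else
        \sum_o phi h a o * (pay (vn (next o)) i + (qc n' (next o) i (f (vn (next o)))).2)))
  end.

(* enough fuel: after horizonM - size h steps all times exceed every horizon *)
Definition horizonM : nat := \max_i m i.

Definition qval (h : history) (i : 'I_k) (a : jaction) : R :=
  (qc (horizonM - size h) h i a).1.
Definition cval (h : history) (i : 'I_k) (a : jaction) : R :=
  (qc (horizonM - size h) h i a).2.
Definition rvals (h : history) : profile := fun i a => qval h i a - cval h i a.
Definition qbar (h : history) (i : 'I_k) : R := qval h i (f (rvals h)).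
Definition cbar (h : history) (i : 'I_k) : R :=
  pay (rvals h) i + cval h i (f (rvals h)).

Definition rcu (h : history) (vs : profile) (i : 'I_k) (o : jpercept) : R :=
  let a := f vs in
  reward o i - pay vs i + qbar (rcons h (a, o)) i - cbar (rcons h (a, o)) i.

Definition exp_rcu (h : history) (vs : profile) (i : 'I_k) : R :=
  \sum_o phi h (f vs) o * rcu h vs i o.

End VCG.

(* Main.v *)
Require Import Defs.
From mathcomp Require Import all_boot all_order all_algebra.
From mathcomp Require Import zify ring lra.
Import Order.TTheory GRing.Theory Num.Theory.
Local Open Scope ring_scope.

Section Aux.
Context {R : realFieldType} {k : nat} (A O : 'I_k -> finType) (Rw : finType).
Variable rval : Rw -> R.
Variable X : {set jaction A}.
Variable f : profile (R:=R) A -> jaction A.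
Variable phi : history A O Rw -> jaction A -> jpercept O Rw -> R.
Variable m : 'I_k -> nat.
Hypothesis Hf : argmax_rule X f.
Hypothesis Hsum : forall h a, \sum_o phi h a o = 1.
Implicit Types h : history A O Rw.

Lemma maxX_ext (F G : jaction A -> R) : F =1 G -> maxX X F = maxX X G.
Proof.
move=> FG; rewrite /maxX; case: pickP => // a0 _.
by rewrite FG; apply: eq_bigr => a _.
Qed.

Lemma pay0 (v : profile A) i : (forall a, v i a = 0) -> pay X f v i = 0.
Proof.
move=> vi0.
have [fX fmax] := Hf v.
set F := fun a => \sum_(j | j != i) v j a.
have HF : forall a, \sum_j v j a = F a.
  by move=> a; rewrite (bigD1 i) //= vi0 add0r.
rewrite /pay -/(F (f v)) /maxX.
case: pickP => [a0 a0X|none]; last by move: (none (f v)); rewrite fX.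
apply/eqP; rewrite subr_eq0; apply/eqP; apply: le_anti; apply/andP; split.
  apply: bigmax_le; first by have := fmax a0 a0X; rewrite !HF.
  by move=> a aX; have := fmax a aX; rewrite !HF.
exact: (le_bigmax_cond _ (P := fun a => a \in X)).
Qed.

Lemma horizon_ge i : (m i <= horizonM m)%N.
Proof. exact: (leq_bigmax i). Qed.

Lemma qval0 h i a : (m i < (size h).+1)%N -> qval rval X f phi m h i a = 0.
Proof.
rewrite /qval; case: (horizonM m - size h)%N => [|n] //= ->; done.
Qed.

Lemma cval0 h i a : (m i <= (size h).+1)%N -> cval rval X f phi m h i a = 0.
Proof.
rewrite /cval; case: (horizonM m - size h)%N => [|n] //= ->; done.
Qed.

Lemma fuel h i : (size h < m i)%N ->
  (horizonM m - size h = (horizonM m - (size h).+1).+1)%N.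
Proof. have := horizon_ge i; lia. Qed.

Lemma qval_unf h i a : (size h < m i)%N ->
  qval rval X f phi m h i a =
  \sum_o phi h a o * (reward rval o i + qbar rval X f phi m (rcons h (a, o)) i).
Proof.
move=> hs; rewrite {1}/qval (fuel _ _ hs) /=.
have -> : (m i < (size h).+1)%N = false by lia.
apply: eq_bigr => o _.
by rewrite /qbar /qval /rvals /qval /cval size_rcons.
Qed.

Lemma cbar0 h i : (m i <= size h)%N -> cbar rval X f phi m h i = 0.
Proof.
move=> hs; rewrite /cbar cval0; last by lia.
rewrite pay0 ?addr0 // => a.
by rewrite /rvals qval0 ?cval0 ?subr0 //; lia.
Qed.

Lemma cval_unf h i a : (size h < m i)%N ->
  cval rval X f phi m h i a =
  \sum_o phi h a o * cbar rval X f phi m (rcons h (a, o)) i.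
Proof.
move=> hs; case: (ltnP (size h).+1 (m i)) => hm.
  rewrite {1}/cval (fuel _ _ hs) /=.
  have -> : (m i <= (size h).+1)%N = false by lia.
  apply: eq_bigr => o _.
  by rewrite /cbar /qval /rvals /qval /cval size_rcons.
rewrite cval0 //; symmetry; apply: big1 => o _.
by rewrite cbar0 ?mulr0 // size_rcons.
Qed.

Lemma exp_rcuE h vs i : (size h < m i)%N ->
  exp_rcu rval X f phi m h vs i = rvals rval X f phi m h i (f vs) - pay X f vs i.
Proof.
move=> hs; rewrite /exp_rcu /rcu /rvals qval_unf // cval_unf //.
have E : forall x y z w : R, x - y + z - w = (x + z) - w - y by move=> *; lra.
move: (pay X f vs i) => P.
under eq_bigr => o _ do rewrite E !mulrBr.
by rewrite !sumrB -mulr_suml Hsum mul1r.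
Qed.

End Aux.

Theorem corollary1 (R : realFieldType) (k : nat) (A O : 'I_k -> finType)
  (Rw : finType) (rval : Rw -> R) (X : {set jaction A})
  (f : profile (R:=R) A -> jaction A)
  (phi : history A O Rw -> jaction A -> jpercept O Rw -> R)
  (m : 'I_k -> nat) :
  argmax_rule X f ->
  (forall h a o, 0 <= phi h a o) ->
  (forall h a, \sum_o phi h a o = 1) ->
  forall (h : history A O Rw) (i : 'I_k) (vt : jaction A -> R),
    (size h < m i)%N ->
    exp_rcu rval X f phi m h
      (fun j => if j == i then vt else rvals rval X f phi m h j) i
    <= exp_rcu rval X f phi m h (rvals rval X f phi m h) i.
Proof.
move=> Hf _ Hs h i vt hs.
rewrite !exp_rcuE //.
set rv := rvals rval X f phi m h.
set vs := fun j => if j == i then vt else rv j.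
have Hm : maxX X (fun a => \sum_(j | j != i) vs j a) =
          maxX X (fun a => \sum_(j | j != i) rv j a).
  by apply: maxX_ext => a; apply: eq_bigr => l /negbTE li; rewrite /vs li.
have Hs2 : forall b, \sum_(j | j != i) vs j b = \sum_(j | j != i) rv j b.
  by move=> b; apply: eq_bigr => l /negbTE li; rewrite /vs li.
rewrite /pay Hm Hs2.
have [fX _] := Hf vs.
have [_ fmax] := Hf rv.
have := fmax _ fX.
rewrite (bigD1 i) //= [X in _ <= X](bigD1 i) //=.
lra.
Qed.
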